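(* Let $\lambda,\mu\in\mathbb{C}^*$, $\alpha,\beta\in\mathbb{C}$ and $t,t'\in\{1,-1\}$. Then: (i) $\Pi(\mathcal{N}_t(\lambda,\alpha))\not\cong\mathcal{N}_{t'}(\mu',\beta')$ for any $\mu'\in\mathbb{C}^*$, $\beta'\in\mathbb{C}$; (ii) $\mathcal{N}_t(\lambda,\alpha)\cong\mathcal{N}_{t'}(\mu,\beta)$ if and only if $\lambda=\mu$, $\alpha=\beta$ and $t=t'$.
   Context: The twisted $N=2$ superconformal algebra $\mathcal{T}$ is the Lie superalgebra over $\mathbb{C}$ with basis $\{L_m, I_r, G_p\mid m\in\mathbb{Z}, r\in\frac12+\mathbb{Z}, p\in\frac12\mathbb{Z}\}$, even part spanned by the $L_m,I_r$, odd part by the $G_p$, only nonzero brackets $[L_m,L_n]=(m-n)L_{m+n}$, $[L_m,I_r]=-rI_{m+r}$, $[L_m,G_p]=(\frac m2-p)G_{m+p}$, $[I_r,G_p]=G_{r+p}$, $[G_p,G_q]=(-1)^{2p}2L_{p+q}$ if $p+q\in\mathbb{Z}$, $[G_p,G_q]=(-1)^{2p+1}(p-q)I_{p+q}$ if $p+q\in\frac12+\mathbb{Z}$. Modules are $\mathbb{Z}_2$-graded and isomorphisms preserve parity; $\Pi$ is the parity-change functor. For $p\in\frac12\mathbb{Z}$, $\lambda^p$ means $(\lambda^{1/2})^{2p}$ for a fixed square root (likewise for $\mu$). For $\lambda\in\mathbb{C}^*,\alpha\in\mathbb{C},t=\pm1$, $\mathcal{N}_t(\lambda,\alpha)$ is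 the space $\mathbb{C}[x]\mathbf{1}_{\bar0}\oplus\mathbb{C}[y]\mathbf{1}_{\bar1}$ (even part $\mathbb{C}[x]\mathbf{1}_{\bar0}$, odd part $\mathbb{C}[y]\mathbf{1}_{\bar1}$; write $f(x)$ for $f(x)\mathbf{1}_{\bar0}$, $g(y)$ for $g(y)\mathbf{1}_{\bar1}$) with $L_mf(x)=\lambda^m(x+m\alpha)f(x+m)$, $L_mg(y)=\lambda^m(y+m(\alpha+\frac12))g(y+m)$, $I_rf(x)=-2t^{2r}\lambda^r\alpha f(x+r)$, $I_rg(y)=t^{2r}\lambda^r(1-2\alpha)g(y+r)$, $G_pf(x)=t^{2p}\lambda^pf(y+p)$, $G_pg(y)=(-t)^{2p}\lambda^p(x+2p\alpha)g(x+p)$, for $m\in\mathbb{Z}$, $r\in\frac12+\mathbb{Z}$, $p\in\frac12\mathbb{Z}$. *)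

(* Defs.v *)
From HB Require Import structures.
From mathcomp Require Import all_boot all_order all_algebra.
From mathcomp Require Import complex.
From mathcomp Require Import reals.
Set Implicit Arguments. Unset Strict Implicit. Unset Printing Implicit Defensive.
Import Order.TTheory GRing.Theory Num.Theory.
Local Open Scope ring_scope.

(* Basis of the twisted N=2 superconformal algebra T:
   TL m = L_m (m in Z); TI k = I_(k + 1/2) (k in Z); TG n = G_(n/2) (n in Z). *)
Inductive Tbasis := TL of int | TI of int | TG of int.

Record TMod (K : fieldType) := {
  M0 : lmodType K;
  M1 : lmodType K;
  act : Tbasis -> (M0 * M1)%type -> (M0 * M1)%type }.

Definition Pi (K : fieldType) (M : TMod K) : TMod K :=
  {| M0 := M1 M; M1 := M0 M;
     act := fun b v => let w := @act _ M b (v.2, v.1) in (w.2, w.1) |}.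

Definition TIso (K : fieldType) (M N : TMod K) : Prop :=
  exists (f0 : {linear M0 M -> M0 N}) (f1 : {linear M1 M -> M1 N}),
    [/\ bijective f0, bijective f1 &
      forall b v, (f0 (@act _ M b v).1, f1 (@act _ M b v).2) = @act _ N b (f0 v.1, f1 v.2)].

Section Nmodule.
Variable R : realType.
Local Notation C := R[i].

Definition shift (c : C) (f : {poly C}) : {poly C} := f \Po ('X + c%:P).
Definition halfz (n : int) : C := n%:~R / 2.

(* The action on N_t(lam, al) = C[x]1_0 (+) C[y]1_1, with lam^(p) := s^(2p),
   s := sq lam the fixed square root of lam. *)
Definition Nact (sq : C -> C) (t lam al : C) (b : Tbasis)
    (v : {poly C} * {poly C}) : {poly C} * {poly C} :=
  let s := sq lam in
  match b with
  | TL m =>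
      (s ^ (2 * m) *: (('X + (m%:~R * al)%:P) * shift m%:~R v.1),
       s ^ (2 * m) *: (('X + (m%:~R * (al + 2^-1))%:P) * shift m%:~R v.2))
  | TI k =>
      let n := 2 * k + 1 in
      ((- 2 * t ^ n * s ^ n * al) *: shift (halfz n) v.1,
       (t ^ n * s ^ n * (1 - 2 * al)) *: shift (halfz n) v.2)
  | TG n =>
      (((- t) ^ n * s ^ n) *: (('X + (n%:~R * al)%:P) * shift (halfz n) v.2),
       (t ^ n * s ^ n) *: shift (halfz n) v.1)
  end.

Definition Nmod (sq : C -> C) (t lam al : C) : TMod C :=
  {| M0 := {poly C}; M1 := {poly C}; act := Nact sq t lam al |}.

End Nmodule.

(* Main.v *)
Require Import Defs.
From HB Require Import structures.
From mathcomp Require Import all_boot all_order all_algebra.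
From mathcomp Require Import complex.
From mathcomp Require Import reals.
Import Order.TTheory GRing.Theory Num.Theory.
Local Open Scope ring_scope.

Lemma shift0 (R : realType) (p : {poly R[i]}) : shift 0 p = p.
Proof. by rewrite /shift addr0 comp_polyXr. Qed.

Lemma shiftC (R : realType) h (k : R[i]) : shift h k%:P = k%:P.
Proof. by rewrite /shift comp_polyC. Qed.

Lemma NG0 (R : realType) sq (t lam al : R[i]) p q :
  Nact sq t lam al (TG 0) (p, q) = ('X * q, p).
Proof.
rewrite /Nact /= /halfz !expr0z.
rewrite mulr1 scale1r (_ : (0%:~R : R[i]) = 0) // !mul0r polyC0 addr0 shift0 scale1r shift0.
by [].
Qed.

Lemma NG1 (R : realType) sq (t lam al : R[i]) p q :
  Nact sq t lam al (TG 1) (p, q) =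
  ((- (t * sq lam)) *: (('X + al%:P) * shift (halfz R 1) q),
   (t * sq lam) *: shift (halfz R 1) p).
Proof.
by rewrite /Nact /= !expr1z mulNr (_ : (1%:~R : R[i]) = 1) // mul1r.
Qed.

Lemma X_not_unit (R : realType) (a : {poly R[i]}) : 'X * a != 1.
Proof.
apply/eqP => /(congr1 (horner^~ 0)).
by rewrite hornerM hornerX mul0r hornerC => /eqP; rewrite eq_sym oner_eq0.
Qed.

Lemma commX_mul (R : realType) (f : {linear {poly R[i]} -> {poly R[i]}}) :
  (forall q, f ('X * q) = 'X * f q) -> forall p, f p = p * f 1.
Proof.
move=> hX; elim/poly_ind => [|p c IH]; first by rewrite linear0 mul0r.
rewrite linearD mulrC hX IH -alg_polyC linearZZ.
by rewrite mulrDl alg_polyC mul_polyC mulrA (mulrC 'X).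
Qed.

Lemma sh1 (R : realType) h : shift h (1 : {poly R[i]}) = 1.
Proof. by rewrite -polyC1 shiftC. Qed.

Theorem theorem2p11 (R : realType) (sq : R[i] -> R[i])
    (hsq : forall z : R[i], sq z ^+ 2 = z)
    (lam mu al be t t' : R[i]) (hlam : lam != 0) (hmu : mu != 0)
    (ht : t = 1 \/ t = -1) (ht' : t' = 1 \/ t' = -1) :
  (forall (mu' be' : R[i]), mu' != 0 ->
      ~ TIso (Pi (Nmod sq t lam al)) (Nmod sq t' mu' be')) /\
  (TIso (Nmod sq t lam al) (Nmod sq t' mu be) <->
      [/\ lam = mu, al = be & t = t']).
Proof.
split.
  move=> mu' be' _ [f0 [f1 [b0 b1 H]]].
  have E : forall a, f1 ('X * a) = f0 a.
    by move=> a; have := H (TG 0) (a, 0); cbn [act M0 M1 Pi Nmod fst snd]; rewrite !NG0; case.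
  case: b0 => g0 _ Kg0.
  have := E (g0 (f1 1)); rewrite Kg0 => /(bij_inj b1) /eqP.
  by rewrite (negbTE (X_not_unit _ _)).
split.
  move=> [f0 [f1 [b0 b1 H]]].
  have E0 : forall p q, (f0 ('X * q), f1 p) = ('X * f1 q, f0 p).
    by move=> p q; have := H (TG 0) (p, q); cbn [act M0 M1 Pi Nmod fst snd]; rewrite !NG0.
  have f10 p : f1 p = f0 p by case: (E0 p 0).
  have hX q : f0 ('X * q) = 'X * f0 q by case: (E0 0 q) => -> _; rewrite f10.
  have hf := @commX_mul R f0 hX.
  have : f0 1 \is a GRing.unit.
    case: b0 => g _ Kg; apply/unitrPr; exists (g 1).
    by rewrite mulrC -hf Kg.
  rewrite poly_unitE => /andP[/size_poly1P[k k0 hk] _].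
  have E1 : forall p q, (f0 ((- (t * sq lam)) *: (('X + al%:P) * shift (halfz R 1) q)),
              f1 ((t * sq lam) *: shift (halfz R 1) p)) =
             ((- (t' * sq mu)) *: (('X + be%:P) * shift (halfz R 1) (f1 q)),
              (t' * sq mu) *: shift (halfz R 1) (f0 p)).
    by move=> p q; have := H (TG 1) (p, q); cbn [act M0 M1 Pi Nmod fst snd]; rewrite !NG1.
  have hts : t * sq lam = t' * sq mu.
    case: (E1 1 0) => _; rewrite !sh1 linearZZ f10 hk !scale_polyC shiftC.
    by rewrite scale_polyC => /polyC_inj; apply: mulIf.
  have nz' : - (t' * sq mu) != 0.
    rewrite oppr_eq0 mulf_eq0 negb_or; apply/andP; split.
      by case: ht' => ->; rewrite ?oppr_eq0 oner_eq0.
    by apply: contra hmu => /eqP h; rewrite -(hsq mu) h expr2 mul0r.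
  have hal : al = be.
    case: (E1 0 1) => + _; rewrite !sh1 mulr1 linearZZ hf f10 hk shiftC hts.
    move/(scalerI nz')/(congr1 (horner^~ 0)).
    by rewrite !hornerE /=; apply: mulIf.
  have t2 : forall u : R[i], u = 1 \/ u = -1 -> u ^+ 2 = 1.
    by move=> u [] ->; rewrite ?sqrrN expr1n.
  have hlm : lam = mu.
    have -> : lam = (t * sq lam) ^+ 2 by rewrite exprMn (t2 t ht) mul1r hsq.
    by rewrite hts exprMn (t2 t' ht') mul1r hsq.
  split => //.
  move: hts; rewrite hlm => /mulIf; apply.
  by apply: contra hmu => /eqP h; rewrite -(hsq mu) h expr2 mul0r.
case=> <- <- <-.
exists idfun, idfun; split; try by exists idfun.
by move=> b [x y] /=; case: (Nact _ _ _ _ _ _).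
Qed.
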